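(* Let $M_1,\dots,M_n$ be real skew-symmetric $m\times m$ matrices with $2\leq n\leq m$, and let $v_1,\dots,v_{m-n}$ be nonpositive real numbers such that $M_1^2-\sum_{l=2}^n M_l^2=\mathrm{Diag}\left(-\tfrac12\mathrm{tr}(M_1^2),\tfrac12\mathrm{tr}(M_2^2),\dots,\tfrac12\mathrm{tr}(M_n^2),v_1,\dots,v_{m-n}\right).$ Then $(v_1,\dots,v_{m-n})=(0,\dots,0)$, $\lambda_1\left(\sum_{l=2}^n M_l^2\right)=\sum_{l=2}^n\lambda_1(M_l^2)$, and $\mathrm{rank}(M_i)\leq2$ for every $i\in\{2,\dots,n\}$.
   Context: For a real symmetric (or complex Hermitian) $m\times m$ matrix $A$, its real eigenvalues counted with multiplicity are ordered $\lambda_1(A)\leq\lambda_2(A)\leq\dots\leq\lambda_m(A)$. *)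

(* Defs.v *)
From HB Require Import structures.
From mathcomp Require Import all_boot all_order all_algebra.
From mathcomp Require Import classical_sets reals.
Set Implicit Arguments. Unset Strict Implicit. Unset Printing Implicit Defensive.
Import Order.TTheory GRing.Theory Num.Theory.
Local Open Scope ring_scope.
Local Open Scope classical_set_scope.

(* lambda_1(A): the smallest (real) eigenvalue of a real square matrix A
   (used only for symmetric A, whose eigenvalues are all real; multiplicity
   is irrelevant for the smallest one). *)
Definition lambda1 (R : realType) (m : nat) (A : 'M[R]_m) : R :=
  inf [set a : R | eigenvalue A a].

Definition skew_symmetric (R : realType) (m : nat) (A : 'M[R]_m) : Prop := A^T = - A.

(* Main.v *)
Require Import Defs.
From HB Require Import structures.
From mathcomp Require Import all_boot all_order all_algebra.
From mathcomp Require Import classical_sets reals.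
From mathcomp Require Import ring lra zify.
Import Order.TTheory GRing.Theory Num.Theory.
Local Open Scope ring_scope.
Set Implicit Arguments. Unset Strict Implicit.
Lemma cs_ineq (R : realFieldType) k (a u : 'I_k -> R) :
  (\sum_i a i * u i) ^+ 2 <= (\sum_i a i ^+ 2) * (\sum_i u i ^+ 2).
Proof.
have H : 0 <= \sum_i \sum_j (a i * u j - a j * u i) ^+ 2.
  by apply: sumr_ge0 => i _; apply: sumr_ge0 => j _; exact: sqr_ge0.
have E0 : \sum_i \sum_j (a i * u j - a j * u i) ^+ 2 =
   \sum_i (\sum_j (a i ^+ 2 * u j ^+ 2) + \sum_j (a j ^+ 2 * u i ^+ 2)
            - \sum_j (2 * (a i * u i) * (a j * u j))).
  apply: eq_bigr => i _; rewrite -big_split -sumrB /=; apply: eq_bigr => j _; ring.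
rewrite E0 sumrB big_split /= in H.
have E1 : \sum_i \sum_j (a i ^+ 2 * u j ^+ 2) = (\sum_i a i ^+ 2) * (\sum_i u i ^+ 2).
  by rewrite mulr_suml; apply: eq_bigr => i _; rewrite mulr_sumr.
have E2 : \sum_i \sum_j (2 * (a i * u i) * (a j * u j)) = 2 * (\sum_i a i * u i) ^+ 2.
  rewrite expr2 mulr_suml mulr_sumr; apply: eq_bigr => i _.
  by rewrite mulr_sumr mulr_sumr; apply: eq_bigr => j _; ring.
have E3 : \sum_i \sum_j (a j ^+ 2 * u i ^+ 2) = (\sum_i a i ^+ 2) * (\sum_i u i ^+ 2).
  by rewrite exchange_big /= mulr_suml; apply: eq_bigr => i _; rewrite mulr_sumr.
rewrite E1 E2 E3 in H. lra.
Qed.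

Lemma sum_nonneg0 (R : realDomainType) (r : seq nat) (f : nat -> R) :
  (forall i, i \in r -> 0 <= f i) -> \sum_(i <- r) f i = 0 ->
  forall i, i \in r -> f i = 0.
Proof.
elim: r => [|a r IH] //= Hf; rewrite big_cons => Hs i.
have Ha : 0 <= f a by apply: Hf; rewrite inE eqxx.
have Hr : 0 <= \sum_(j <- r) f j.
  by rewrite big_seq; apply: sumr_ge0 => j Hj; apply: Hf; rewrite inE Hj orbT.
have Ea : f a = 0 by lra.
have Er : \sum_(j <- r) f j = 0 by lra.
rewrite inE => /orP [/eqP -> //| Hi].
by apply: IH => // j Hj; apply: Hf; rewrite inE Hj orbT.
Qed.

Section Mx.
Variable R : realType.
Variable k : nat.
Implicit Types M : 'M[R]_k.+1.

Definition skewp M := M^T = - M.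

Lemma skewE M : skewp M -> forall i j, M i j = - M j i.
Proof. by rewrite /skewp => H i j; have := congr1 (fun A : 'M[R]_k.+1 => A j i) H; rewrite !mxE => ->; rewrite ?opprK. Qed.

Lemma skew0 M : skewp M -> forall i, M i i = 0.
Proof. move=> H i; have := skewE H i i; lra. Qed.

Lemma sq_entry M i j : (M ^+ 2) i j = \sum_t M i t * M t j.
Proof. by rewrite expr2 -mulmxE mxE. Qed.

Lemma sq_diag M : skewp M -> forall i, (M ^+ 2) i i = - \sum_t M i t ^+ 2.
Proof.
move=> H i; rewrite sq_entry -sumrN; apply: eq_bigr => t _.
by rewrite (skewE H t i) expr2; ring.
Qed.

Definition rr M := \sum_j M ord0 j ^+ 2.
Definition WW M := \sum_(i | i != ord0) \sum_(j | j != ord0) M i j ^+ 2.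

Lemma rr_ge0 M : 0 <= rr M.
Proof. by apply: sumr_ge0 => j _; exact: sqr_ge0. Qed.
Lemma WW_ge0 M : 0 <= WW M.
Proof. by apply: sumr_ge0 => i _; apply: sumr_ge0 => j _; exact: sqr_ge0. Qed.

Lemma rr_col M : skewp M -> rr M = \sum_i M i ord0 ^+ 2.
Proof. by move=> H; apply: eq_bigr => j _; rewrite (skewE H) sqrrN. Qed.

Lemma tr_sq M : skewp M -> \tr (M ^+ 2) = - (2 * rr M + WW M).
Proof.
move=> H; rewrite /mxtrace.
under eq_bigr do rewrite sq_diag //.
rewrite sumrN; congr (- _).
rewrite (bigD1 ord0) //= -/(rr M).
have -> : \sum_(i | i != ord0) \sum_t M i t ^+ 2 =
   \sum_(i | i != ord0) M i ord0 ^+ 2 + WW M.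
  rewrite /WW -big_split /=; apply: eq_bigr => i _.
  by rewrite (bigD1 ord0).
have -> : \sum_(i | i != ord0) M i ord0 ^+ 2 = rr M.
  by rewrite (rr_col H) [RHS](bigD1 ord0) //= (skew0 H) expr0n /= add0r.
ring.
Qed.

Lemma sq00 M : skewp M -> (M ^+ 2) ord0 ord0 = - rr M.
Proof. by move=> H; rewrite sq_diag. Qed.

Definition struct M := forall i j, i != ord0 -> j != ord0 -> M i j = 0.

Lemma WW0_struct M : WW M = 0 -> struct M.
Proof.
move=> H i j Hi Hj.
have Hi0 : \sum_(j | j != ord0) M i j ^+ 2 = 0.
  apply: (psumr_eq0P _ H) => // i' _; apply: sumr_ge0 => j' _; exact: sqr_ge0.
have : M i j ^+ 2 = 0.
  apply: (psumr_eq0P _ Hi0) => // j' _; exact: sqr_ge0.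
by move/eqP; rewrite sqrf_eq0 => /eqP.
Qed.

Lemma rank_struct M : skewp M -> struct M -> (\rank M <= 2)%N.
Proof.
move=> Hs Hst.
pose e : 'rV[R]_k.+1 := delta_mx 0 ord0.
have -> : M = row_mx (col ord0 M) e^T *m col_mx e (row ord0 M).
  rewrite mul_row_col; apply/matrixP => i j; rewrite !mxE.
  rewrite !big_ord1 !mxE /=.
  case: (eqVneq i ord0) => [->|Hi]; case: (eqVneq j ord0) => [->|Hj] /=;
    rewrite ?mulr1 ?mulr0 ?mul1r ?mul0r ?addr0 ?add0r ?(skew0 Hs) ?addr0 //.
  by rewrite Hst.
have := mulmx_max_rank (row_mx (col ord0 M) e^T) (col_mx e (row ord0 M)). done.
Qed.

End Mx.

Section Lam.
Variable R : realType.
Variable k : nat.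

Lemma quad (M : 'M[R]_k.+1) (u : 'rV_k.+1) : skewp M -> struct M ->
  - (rr M * \sum_j u 0 j ^+ 2) <= \sum_j (u *m M ^+ 2) 0 j * u 0 j.
Proof.
move=> Hs Hst.
rewrite expr2 -mulmxE mulmxA.
set w := u *m M.
have E : \sum_j (w *m M) 0 j * u 0 j = - \sum_t w 0 t ^+ 2.
  under eq_bigr do rewrite mxE big_distrl /=.
  rewrite exchange_big -sumrN; apply: eq_bigr => t _ /=.
  have -> : w 0 t = - \sum_j M t j * u 0 j.
    rewrite /w mxE -sumrN; apply: eq_bigr => j _; rewrite (skewE Hs j t); ring.
  by rewrite sqrrN expr2 -mulNr mulr_sumr; apply: eq_bigr => i _; ring.
rewrite E lerN2.
have Wt : forall t, t != ord0 -> w 0 t = u 0 ord0 * M ord0 t.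
  move=> t Ht; rewrite /w mxE (bigD1 ord0) //= big1 ?addr0 // => i Hi.
  by rewrite Hst // mulr0.
have W0 : w 0 ord0 = \sum_i M i ord0 * (if i == ord0 then 0 else u 0 i).
  rewrite /w mxE; apply: eq_bigr => i _.
  case: (eqVneq i ord0) => [->|_]; first by rewrite (skew0 Hs) !mulr0.
  by rewrite mulrC.
have CS := cs_ineq (fun i => M i ord0) (fun i => if i == ord0 then 0 else u 0 i).
rewrite -W0 /= -(rr_col Hs) in CS.
have Eu : \sum_i (if i == ord0 then 0 else u 0 i) ^+ 2 = \sum_(i | i != ord0) u 0 i ^+ 2.
  rewrite (bigD1 ord0) //= ?eqxx expr0n /= add0r; apply: eq_bigr => i /negPf -> //.
have Eq : \sum_j u 0 j ^+ 2 = u 0 ord0 ^+ 2 + \sum_(i | i != ord0) u 0 i ^+ 2.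
  by rewrite (bigD1 ord0).
have Er : rr M = \sum_(i | i != ord0) M ord0 i ^+ 2.
  by rewrite /rr (bigD1 ord0) //= (skew0 Hs) expr0n /= add0r.
have Ew : \sum_t w 0 t ^+ 2 = w 0 ord0 ^+ 2 + u 0 ord0 ^+ 2 * rr M.
  rewrite (bigD1 ord0) //=; congr (_ + _); rewrite Er mulr_sumr.
  by apply: eq_bigr => t Ht; rewrite Wt // exprMn.
rewrite Eu in CS; rewrite Ew Eq.
set a := w 0 ord0 ^+ 2 in CS *; set b := u 0 ord0 ^+ 2; set c := rr M in CS *.
set d := \sum_(i | i != ord0) u 0 i ^+ 2 in CS *.
nra.
Qed.

End Lam.

Lemma lam (R : realType) k (M : nat -> 'M[R]_k.+1) a b :
  (forall l, (a <= l < b)%N -> skewp (M l) /\ struct (M l)) ->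
  lambda1 (\sum_(a <= l < b) M l ^+ 2) = - \sum_(a <= l < b) rr (M l).
Proof.
move=> H.
set S := \sum_(a <= l < b) M l ^+ 2.
set R0 := \sum_(a <= l < b) rr (M l).
have Hev : eigenvalue S (- R0).
  apply/eigenvalueP; exists (delta_mx 0 ord0 : 'rV[R]_k.+1).
    apply/matrixP => x j; rewrite -rowE !mxE summxE ord1 /=.
    case: (eqVneq j ord0) => [->|Hj] /=.
      rewrite mulr1 /R0 -sumrN; apply: eq_big_nat => l Hl.
      by have [Hs _] := H l Hl; exact: sq00.
    rewrite [X in _ = X](_ : _ = 0); last by ring.
    rewrite big_nat big1 // => l Hl.
    have [Hs Hst] := H l Hl.
    rewrite sq_entry (bigD1 ord0) //= (skew0 Hs) mul0r add0r big1 // => t Ht.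
    by rewrite (Hst t j) // mulr0.
  apply/eqP => /matrixP /(_ 0 ord0); rewrite !mxE eqxx /= => /eqP.
  by rewrite oner_eq0.
have Hlb : forall y, eigenvalue S y -> - R0 <= y.
  move=> y /eigenvalueP [u Hu Hnz].
  set q := \sum_j u 0 j ^+ 2.
  have qpos : 0 < q.
    case: (pickP (fun j => u 0 j != 0)) => [j Hj | Hall]; last first.
      move/eqP: Hnz; case; apply/matrixP => i j; rewrite ord1 mxE.
      by apply/eqP; move: (Hall j) => /= /negbFE.
    rewrite /q (bigD1 j) //=.
    have h1 : 0 < u 0 j ^+ 2 by rewrite exprn_even_gt0 // Hj orbT.
    have h2 : 0 <= \sum_(i | i != j) u 0 i ^+ 2 by apply: sumr_ge0 => i _; exact: sqr_ge0.
    lra.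
  have E1 : \sum_j (u *m S) 0 j * u 0 j = y * q.
    by rewrite Hu /q mulr_sumr; apply: eq_bigr => j _; rewrite mxE; ring.
  have E2 : \sum_j (u *m S) 0 j * u 0 j =
      \sum_(a <= l < b) \sum_j (u *m M l ^+ 2) 0 j * u 0 j.
    rewrite /S mulmx_sumr.
    under eq_bigr do rewrite summxE big_distrl.
    by rewrite exchange_big.
  have E3 : - (R0 * q) <= \sum_(a <= l < b) \sum_j (u *m M l ^+ 2) 0 j * u 0 j.
    rewrite /R0 mulr_suml -sumrN; apply: ler_sum_nat => l Hl.
    by have [Hs Hst] := H l Hl; exact: quad.
  rewrite -E2 E1 -mulNr in E3.
  by rewrite -(ler_pM2r qpos).
rewrite /lambda1; apply/le_anti/andP; split.
  apply: (ge_inf _ Hev); exists (- R0) => y Hy; exact: Hlb.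
apply: lb_le_inf; first by exists (- R0).
by move=> y Hy; exact: Hlb.
Qed.

Theorem lemma4p1 (R : realType) (m n : nat) (M : nat -> 'M[R]_m) (v : nat -> R)
  (hn : (2 <= n)%N) (hnm : (n <= m)%N)
  (hskew : forall l, (1 <= l <= n)%N -> skew_symmetric (M l))
  (hv : forall k, (1 <= k <= m - n)%N -> v k <= 0)
  (hdiag : M 1%N ^+ 2 - \sum_(2 <= l < n.+1) M l ^+ 2 =
     diag_mx (\row_(i < m)
       (if i == 0%N :> nat then - (2^-1 * \tr (M 1%N ^+ 2))
        else if (i < n)%N then 2^-1 * \tr (M i.+1 ^+ 2)
        else v (i - n).+1)) ) :
  (forall k, (1 <= k <= m - n)%N -> v k = 0) /\
  lambda1 (\sum_(2 <= l < n.+1) M l ^+ 2) = \sum_(2 <= l < n.+1) lambda1 (M l ^+ 2) /\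
  (forall i, (2 <= i <= n)%N -> (\rank (M i) <= 2)%N).
Proof.
destruct m as [|k]; first by have := leq_trans hn hnm.
have Hsk : forall l, (1 <= l <= n)%N -> skewp (M l) by exact: hskew.
have Hsk2 : forall l, (2 <= l < n.+1)%N -> skewp (M l).
  by move=> l Hl; apply: Hsk; lia.
have Hs1 : skewp (M 1%N) by apply: Hsk; lia.
set A := \sum_(2 <= l < n.+1) rr (M l).
set B := \sum_(2 <= l < n.+1) WW (M l).
have SA : \sum_(2 <= l < n.+1) (M l ^+ 2) ord0 ord0 = - A.
  by rewrite /A -sumrN; apply: eq_big_nat => l Hl; rewrite sq00 //; exact: Hsk2.
have ST : \sum_(2 <= l < n.+1) \tr (M l ^+ 2) = - (2 * A + B).
  rewrite /A /B mulr_sumr -big_split -sumrN /=; apply: eq_big_nat => l Hl.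
  by rewrite tr_sq //; exact: Hsk2.
have E00 := congr1 (fun X : 'M[R]_k.+1 => X ord0 ord0) hdiag.
rewrite /= !mxE summxE /= -sq_entry (sq00 Hs1) SA (tr_sq Hs1) mulr1n in E00.
pose F (i : nat) := if i == 0%N then - (2^-1 * \tr (M 1%N ^+ 2))
        else if (i < n)%N then 2^-1 * \tr (M i.+1 ^+ 2)
        else v (i - n).+1.
have Etr := congr1 mxtrace hdiag.
rewrite mxtrace_diag in Etr.
have ER : \sum_j (\row_(i < k.+1)
       (if i == 0%N :> nat then - (2^-1 * \tr (M 1%N ^+ 2))
        else if (i < n)%N then 2^-1 * \tr (M i.+1 ^+ 2)
        else v (i - n).+1)) 0 j = \sum_(0 <= i < k.+1) F i.
  by rewrite big_mkord; apply: eq_bigr => j _; rewrite mxE.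
have EL : \tr (M 1%N ^+ 2 - \sum_(2 <= l < n.+1) M l ^+ 2) =
   \tr (M 1%N ^+ 2) - \sum_(2 <= l < n.+1) \tr (M l ^+ 2).
  by rewrite linearB /= linear_sum.
rewrite EL ER (big_ltn (m := 0)) // (@big_cat_nat _ _ _ n 1 k.+1) /= in Etr; last by lia.
have EM : \sum_(1 <= i < n) F i = 2^-1 * - (2 * A + B).
  rewrite -ST mulr_sumr.
  have -> : \sum_(2 <= l < n.+1) 2^-1 * \tr (M l ^+ 2) =
     \sum_(1 <= i < n) 2^-1 * \tr (M i.+1 ^+ 2) by rewrite big_add1.
  apply: eq_big_nat => i Hi; rewrite /F.
  have -> : (i == 0%N) = false by apply/negbTE; lia.
  by have -> : (i < n)%N = true by lia.
set V := \sum_(n <= i < k.+1) v (i - n).+1.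
have EV : \sum_(n <= i < k.+1) F i = V.
  apply: eq_big_nat => i Hi; rewrite /F.
  have -> : (i == 0%N) = false by apply/negbTE; lia.
  by have -> : (i < n)%N = false by lia.
have Vle : V <= 0.
  rewrite /V big_nat; apply: sumr_le0 => i Hi; apply: hv; lia.
have F0 : F 0%N = - (2^-1 * \tr (M 1%N ^+ 2)) by [].
rewrite EM EV F0 ST (tr_sq Hs1) in Etr.
have Hr1 := rr_ge0 (M 1%N).
have HW1 := WW_ge0 (M 1%N).
have HB : 0 <= B by rewrite /B big_nat; apply: sumr_ge0 => l _; exact: WW_ge0.
have B0 : B = 0 by lra.
have V0 : V = 0 by lra.
have Hst : forall l, (2 <= l < n.+1)%N -> struct (M l).
  move=> l Hl; apply: WW0_struct.
  apply: (@sum_nonneg0 R (index_iota 2 n.+1) (fun l => WW (M l))) => //.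
    by move=> i _; exact: WW_ge0.
  by rewrite mem_index_iota.
split.
  move=> k0 Hk0.
  have Hz : forall i, i \in index_iota n k.+1 -> - v (i - n).+1 = 0.
    apply: sum_nonneg0.
      move=> i; rewrite mem_index_iota => Hi; rewrite oppr_ge0; apply: hv; lia.
    by rewrite sumrN -/V V0 oppr0.
  have := Hz (k0 + n).-1; rewrite mem_index_iota.
  have -> : ((k0 + n).-1 - n).+1 = k0 by lia.
  move=> H; have := H ltac:(lia); lra.
split.
  rewrite (lam (a := 2) (b := n.+1)); last by move=> l Hl; split; [exact: Hsk2 | exact: Hst].
  rewrite -sumrN; apply: eq_big_nat => l Hl.
  have := lam (M := M) (a := l) (b := l.+1); rewrite !big_nat1.
  move=> H; symmetry; apply: H => l' Hl'; have -> : l' = l by lia.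
  by split; [exact: Hsk2 | exact: Hst].
move=> i Hi; apply: rank_struct; [apply: Hsk2 | apply: Hst]; lia.
by lia.
Qed.
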